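(* Let $\lambda_{\min}<\lambda_{\max}$ and let $h\colon\mathbb{R}\to\mathbb{R}$ be continuous and $(\lambda_{\max}-\lambda_{\min})$-periodic, having only one maximum point on $[\lambda_{\min},\lambda_{\max})$ (i.e. on one period). Let $\mathcal{F}$ be the generalized von Mises family generated by $h$, consisting of the functions on $[\lambda_{\min},\lambda_{\max}]$ \[ f_{a,b,s}(\lambda)=\exp\bigl(b+a\,h(\lambda-s)\bigr),\qquad a\ge 0,\ b\in\mathbb{R},\ s\in\mathbb{R}. \] Assume $\mathcal{F}$ is closed under pointwise multiplication. Then $\mathcal{F}$ is the von Mises family, i.e. one can take $h(\lambda)=\cos\frac{2\pi\lambda}{\lambda_{\max}-\lambda_{\min}}$ (the family $\mathcal{F}$ coincides with $\{\exp(b+a\cos\frac{2\pi(\lambda-s)}{\lambda_{\max}-\lambda_{\min}}):a\ge0,\,b,s\in\mathbb{R}\}$). *)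

(* Defs.v *)
From Stdlib Require Import Reals.
Open Scope R_scope.

Definition gvM_family (lmin lmax : R) (h : R -> R) (f : R -> R) : Prop :=
  exists a b s : R, 0 <= a /\
    forall lam, lmin <= lam <= lmax -> f lam = exp (b + a * h (lam - s)).

Definition unique_max_on_period (lmin lmax : R) (h : R -> R) : Prop :=
  exists! x0 : R, (lmin <= x0 < lmax) /\
    (forall y, lmin <= y < lmax -> h y <= h x0).

Definition mult_closed (F : (R -> R) -> Prop) : Prop :=
  forall f g, F f -> F g -> F (fun lam => f lam * g lam).

Definition vM_cos (lmin lmax : R) (lam : R) : R :=
  cos (2 * PI * lam / (lmax - lmin)).

(* Main.v *)
Require Import Defs.
From Stdlib Require Import Reals Lra Lia.
Open Scope R_scope.

Lemma floorZ (r : R) : exists z : Z, IZR z <= r < IZR z + 1.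
Proof.
  destruct (archimed r) as [H1 H2]. exists (up r - 1)%Z.
  rewrite minus_IZR. simpl. lra.
Qed.

Lemma per_Z (f : R -> R) (T : R) :
  (forall x, f (x + T) = f x) -> forall (j : Z) x, f (x + IZR j * T) = f x.
Proof.
  intros Hp j. induction j using Z.peano_ind; intros x.
  - simpl. f_equal. ring.
  - rewrite succ_IZR. replace (x + (IZR j + 1) * T) with ((x + IZR j * T) + T) by ring.
    rewrite Hp. apply IHj.
  - rewrite <- Z.sub_1_r, minus_IZR.
    rewrite <- (Hp (x + (IZR j - 1) * T)).
    replace (x + (IZR j - 1) * T + T) with (x + IZR j * T) by ring.
    apply IHj.
Qed.
Lemma cont_eps (f : R -> R) x : continuity_pt f x ->
  forall eps, 0 < eps -> exists d, 0 < d /\ forall y, Rabs (y - x) < d -> Rabs (f y - f x) < eps.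
Proof.
  intros Hc eps He. destruct (Hc eps He) as [d [Hd H]]. exists d; split; auto.
  intros y Hy. destruct (Req_dec y x) as [->|Hne].
  - rewrite Rminus_diag, Rabs_R0; auto.
  - apply (H y). split. split; auto. exact I. exact Hy.
Qed.

Definition Good (T : R) (k : R -> R) : Prop :=
  0 < T /\ continuity k /\ (forall x, k (x + T) = k x) /\ (forall x, k (x + T/2) = - k x) /\
  (forall x, k x <= k 0) /\ (forall z, k z = k 0 -> exists j : Z, z = IZR j * T) /\
  (forall a1 a2 t1 t2, 0 <= a1 -> 0 <= a2 -> exists a t, 0 <= a /\
     forall x, a1 * k (x + t1) + a2 * k (x + t2) = a * k (x + t)).

Lemma IZR_half (j : Z) : IZR j <> 1/2.
Proof.
  intro H. assert (IZR (2 * j) = IZR 1) by (rewrite mult_IZR; simpl; lra).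
  apply eq_IZR in H0. lia.
Qed.

Lemma Good_K T k : Good T k -> 0 < k 0.
Proof.
  intros (HT & Hc & Hp & Ha & Hm & Hu & Hs).
  assert (H1 := Hm (0 + T/2)). rewrite Ha in H1.
  destruct (Req_dec (k 0) 0) as [E|E]; [|lra].
  assert (k (0 + T/2) = k 0) by (rewrite Ha; lra).
  destruct (Hu _ H) as [j Hj]. exfalso. apply (IZR_half j).
  apply (Rmult_eq_reg_r T); [|lra]. lra.
Qed.

Lemma qmax T k : Good T k -> forall d, 0 < d -> d < T/2 ->
  exists g, 0 < g /\ forall z, k z > k 0 - g -> exists j : Z, Rabs (z - IZR j * T) < d.
Proof.
  intros HG. pose proof HG as (HT & Hc & Hp & Ha & Hm & Hu & Hs).
  intros d Hd HdT.
  destruct (continuity_ab_maj k d (T - d)) as [M [HM1 HM2]]; [lra| intros; apply Hc|].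
  assert (k M < k 0).
  { destruct (Rle_lt_or_eq_dec _ _ (Hm M)) as [|E]; auto.
    destruct (Hu _ E) as [j Hj]. exfalso.
    assert (0 < IZR j) by (apply (Rmult_lt_reg_r T); lra).
    assert (IZR j < 1) by (apply (Rmult_lt_reg_r T); lra).
    apply lt_IZR in H. apply lt_IZR in H0. lia. }
  exists (k 0 - k M). split; [lra|].
  intros z Hz. destruct (floorZ (z / T)) as [j Hj].
  set (z' := z - IZR j * T).
  assert (Hz' : k z' = k z).
  { unfold z'. replace (z - IZR j * T) with (z + IZR (- j) * T) by (rewrite opp_IZR; ring).
    apply per_Z; auto. }
  assert (0 <= z' < T).
  { unfold z'. destruct Hj as [Hj1 Hj2].
    split.
    - apply (Rmult_le_compat_r T) in Hj1; [|lra]. unfold Rdiv in Hj1.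
      rewrite Rmult_assoc, Rinv_l in Hj1; lra.
    - apply (Rmult_lt_compat_r T) in Hj2; [|lra]. unfold Rdiv in Hj2.
      rewrite Rmult_assoc, Rinv_l in Hj2; lra. }
  destruct (Rlt_or_le z' d).
  { exists j. unfold z' in *. rewrite Rabs_right; lra. }
  destruct (Rlt_or_le (T - d) z').
  { exists (j + 1)%Z. rewrite plus_IZR. unfold z' in *.
    rewrite Rabs_left1; simpl; lra. }
  exfalso. assert (k z' <= k M) by (apply HM1; lra). lra.
Qed.

Definition inL (T : R) (k : R -> R) (v : R -> R) : Prop :=
  exists a t, 0 <= a /\ forall x, v x = a * k (x + t).

Lemma inL_scale T k c u : Good T k -> inL T k (fun x => c * k (x + u)).
Proof.
  intros (HT & Hc & Hp & Ha & Hm & Hu & Hs).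
  destruct (Rle_or_lt 0 c).
  - exists c, u. split; auto.
  - exists (- c), (u + T/2). split; [lra|]. intros x.
    replace (x + (u + T/2)) with ((x + u) + T/2) by ring. rewrite Ha. ring.
Qed.

Lemma inL_add T k v w : Good T k -> inL T k v -> inL T k w -> inL T k (fun x => v x + w x).
Proof.
  intros (HT & Hc & Hp & Ha & Hm & Hu & Hs) [a [t [Ha0 Hv]]] [b [u [Hb0 Hw]]].
  destruct (Hs a b t u Ha0 Hb0) as [c [s [Hc0 Hcs]]].
  exists c, s. split; auto. intros x. rewrite Hv, Hw. apply Hcs.
Qed.

Fixpoint sumN (F : nat -> R) (n : nat) : R :=
  match n with O => 0 | S n => sumN F n + F n end.

Lemma sumN_ext F G n : (forall j, F j = G j) -> sumN F n = sumN G n.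
Proof. intros H; induction n; simpl; auto. rewrite IHn, H; auto. Qed.

Lemma inL_sum T k (c u : nat -> R) N : Good T k ->
  inL T k (fun x => sumN (fun j => c j * k (x + u j)) N).
Proof.
  intros HG. induction N.
  - exists 0, 0. split; [lra|]. intros; simpl; ring.
  - simpl. apply (inL_add T k (fun x => sumN (fun j => c j * k (x + u j)) N)
                  (fun x => c N * k (x + u N))); auto.
    apply inL_scale; auto.
Qed.

Lemma sumN_shift1 (H : R -> R) N :
  sumN (fun j => H (INR j + 1)) N = sumN (fun j => H (INR j)) N + H (INR N) - H 0.
Proof.
  induction N; simpl sumN.
  - simpl. ring.
  - rewrite IHN. try rewrite S_INR. destruct N; simpl; ring.
Qed.

Lemma sumN_shift_nat (G : R -> R) N : (forall r, G (r + INR N) = G r) ->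
  forall m : nat, sumN (fun j => G (INR j + INR m)) N = sumN (fun j => G (INR j)) N.
Proof.
  intros HG m. induction m.
  - apply sumN_ext. intros j. simpl. f_equal. ring.
  - rewrite (sumN_ext _ (fun j => (fun r => G (r + INR m)) (INR j + 1))).
    2:{ intros j. cbv beta. f_equal. rewrite S_INR. ring. }
    rewrite (sumN_shift1 (fun r => G (r + INR m))). cbv beta. rewrite IHm.
    replace (G (INR N + INR m)) with (G (INR m)). replace (0 + INR m) with (INR m) by ring. ring.
    rewrite Rplus_comm; symmetry; apply HG.
Qed.

Lemma sumN_shift_Z (G : R -> R) N : (forall r, G (r + INR N) = G r) ->
  forall m : Z, sumN (fun j => G (INR j + IZR m)) N = sumN (fun j => G (INR j)) N.
Proof.
  intros HG m. destruct (Z.le_gt_cases 0 m) as [Hm0|Hm0].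
  - rewrite <- (Znat.Z2Nat.id m) by lia. rewrite <- INR_IZR_INZ. apply sumN_shift_nat; auto.
  - set (n := Z.to_nat (- m)).
    assert (H : IZR m = - INR n). { unfold n. rewrite INR_IZR_INZ, Znat.Z2Nat.id by lia. rewrite opp_IZR. ring. }
    rewrite H.
    set (G' := fun r => G (r - INR n)).
    assert (HG' : forall r, G' (r + INR N) = G' r).
    { intros r. unfold G'. replace (r + INR N - INR n) with ((r - INR n) + INR N) by ring. apply HG. }
    pose proof (sumN_shift_nat G' N HG' n) as E. unfold G' in E.
    rewrite (sumN_ext (fun j => G (INR j + INR n - INR n)) (fun j => G (INR j))) in E.
    2:{ intros; f_equal; ring. }
    rewrite E. apply sumN_ext. intros; f_equal; ring.
Qed.

Lemma sumN_ab (a b : nat -> R) N :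
  sumN (fun j => a j * b j) N <= (sumN (fun j => a j * a j) N + sumN (fun j => b j * b j) N) / 2.
Proof.
  induction N; simpl; [lra|].
  assert (0 <= (a N - b N) * (a N - b N)) by apply Rle_0_sqr. lra.
Qed.

Lemma sumN_sq_ge (a : nat -> R) N : (1 <= N)%nat -> a 0%nat * a 0%nat <= sumN (fun j => a j * a j) N.
Proof.
  intros H. induction N; [lia|]. simpl.
  destruct N.
  - simpl. lra.
  - assert (0 <= a (S N) * a (S N)) by apply Rle_0_sqr.
    assert (a 0%nat * a 0%nat <= sumN (fun j => a j * a j) (S N)) by (apply IHN; lia). lra.
Qed.

Lemma grid T k : Good T k -> forall N : nat, (1 <= N)%nat ->
  exists t, (exists y, 0 <= y < T / INR N /\ k y <= k t) /\
   forall m : Z, k (IZR m * (T / INR N) + t) = k (- (IZR m * (T / INR N)) + t).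
Proof.
  intros HG N HN. pose proof HG as (HT & Hc & Hp & Ha & Hm & Hu & Hs).
  assert (HNp : 0 < INR N) by (apply lt_0_INR; lia).
  set (d := T / INR N).
  assert (Hd : 0 < d) by (unfold d; apply Rdiv_lt_0_compat; auto).
  assert (HNd : INR N * d = T) by (unfold d; field; lra).
  set (kk := fun r => k (r * d)).
  assert (Hkk : forall r, kk (r + INR N) = kk r).
  { intros r. unfold kk. rewrite Rmult_plus_distr_r, HNd. apply Hp. }
  destruct (inL_sum T k (fun j => kk (INR j)) (fun j => INR j * d) N HG) as [a [t [Ha0 Hg]]].
  set (g := fun x => sumN (fun j => kk (INR j) * k (x + INR j * d)) N).
  assert (Hg' : forall x, g x = a * k (x + t)) by (intros; apply Hg). clear Hg.
  assert (Hg0 : g 0 = sumN (fun j => kk (INR j) * kk (INR j)) N).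
  { unfold g. apply sumN_ext. intros j. unfold kk. f_equal. f_equal. ring. }
  assert (Hgm : forall m : Z, g (IZR m * d) = sumN (fun j => kk (INR j) * kk (INR j + IZR m)) N).
  { intros m. unfold g. apply sumN_ext. intros j. unfold kk. f_equal. f_equal. ring. }
  assert (Hgm' : forall m : Z, g (- (IZR m * d)) = sumN (fun j => kk (INR j - IZR m) * kk (INR j)) N).
  { intros m. unfold g. apply sumN_ext. intros j. unfold kk. rewrite Rmult_comm. f_equal. f_equal. ring. }
  assert (Hsym : forall m : Z, g (IZR m * d) = g (- (IZR m * d))).
  { intros m. rewrite Hgm, Hgm'.
    set (G := fun r => kk (r - IZR m) * kk r).
    assert (HG' : forall r, G (r + INR N) = G r).
    { intros r. unfold G. replace (r + INR N - IZR m) with ((r - IZR m) + INR N) by ring.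
      rewrite !Hkk. auto. }
    transitivity (sumN (fun j => G (INR j + IZR m)) N).
    { apply sumN_ext. intros j. unfold G.
      replace (INR j + IZR m - IZR m) with (INR j) by ring. ring. }
    rewrite (sumN_shift_Z G N HG' m). apply sumN_ext. intros j. unfold G. auto. }
  assert (Hle : forall m : Z, g (IZR m * d) <= g 0).
  { intros m. rewrite Hgm, Hg0.
    eapply Rle_trans. apply (sumN_ab (fun j => kk (INR j)) (fun j => kk (INR j + IZR m))).
    set (G := fun r => kk r * kk r).
    assert (HG' : forall r, G (r + INR N) = G r) by (intros r; unfold G; rewrite Hkk; auto).
    pose proof (sumN_shift_Z G N HG' m) as E. unfold G in E. cbv beta in E. rewrite E. lra. }
  assert (Hpos : 0 < g 0).
  { rewrite Hg0. eapply Rlt_le_trans; [|apply (sumN_sq_ge (fun j => kk (INR j))); auto].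
    unfold kk. simpl. rewrite Rmult_0_l. pose proof (Good_K T k HG). nra. }
  assert (Hapos : 0 < a).
  { destruct (Rle_lt_or_eq_dec _ _ Ha0); auto. rewrite Hg' in Hpos. subst a. lra. }
  exists t. split.
  - destruct (floorZ (t / d)) as [z [Hz1 Hz2]].
    exists (IZR (- z) * d + t). rewrite opp_IZR. split.
    + split.
      * apply (Rmult_le_compat_r d) in Hz1; [|lra]. unfold Rdiv in Hz1.
        rewrite Rmult_assoc, Rinv_l in Hz1; lra.
      * apply (Rmult_lt_compat_r d) in Hz2; [|lra]. unfold Rdiv in Hz2.
        rewrite Rmult_assoc, Rinv_l in Hz2; lra.
    + pose proof (Hle (- z)%Z) as L. rewrite !Hg' in L. rewrite opp_IZR in L.
      rewrite Rplus_0_l in L. apply Rmult_le_reg_l in L; auto.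
  - intros m. pose proof (Hsym m) as S. rewrite !Hg' in S.
    apply Rmult_eq_reg_l in S; lra.
Qed.

Lemma even_dyadic T k : Good T k -> forall (m : Z) (p : nat),
  k (IZR m * T / 2 ^ p) = k (- (IZR m * T / 2 ^ p)).
Proof.
  intros HG m p. pose proof HG as (HT & Hc & Hp & Ha & Hm & Hu & Hs).
  set (x := IZR m * T / 2 ^ p).
  destruct (Req_dec (k x) (k (- x))) as [E|E]; auto. exfalso.
  set (eta := Rabs (k x - k (- x))).
  assert (Heta : 0 < eta) by (apply Rabs_pos_lt; lra).
  destruct (cont_eps k x (Hc x) (eta/2)) as [d1 [Hd1 C1]]; [lra|].
  destruct (cont_eps k (- x) (Hc (- x)) (eta/2)) as [d2 [Hd2 C2]]; [lra|].
  set (de := Rmin (Rmin d1 d2) (T/4)).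
  assert (Hde : 0 < de) by (unfold de; repeat apply Rmin_pos; lra).
  assert (Hde1 : de <= d1) by (unfold de; eapply Rle_trans; [apply Rmin_l|apply Rmin_l]).
  assert (Hde2 : de <= d2) by (unfold de; eapply Rle_trans; [apply Rmin_l|apply Rmin_r]).
  assert (Hde3 : de <= T/4) by (unfold de; apply Rmin_r).
  destruct (qmax T k HG de Hde) as [g [Hg Hq]]; [lra|].
  destruct (cont_eps k 0 (Hc 0) g Hg) as [d0 [Hd0 C0]].
  destruct (archimed (T / d0)) as [Ar _].
  set (M := Z.to_nat (up (T / d0))).
  assert (HM : T / d0 < INR M).
  { unfold M. rewrite INR_IZR_INZ, Znat.Z2Nat.id; auto.
    apply le_IZR. assert (0 < T / d0) by (apply Rdiv_lt_0_compat; lra). lra. }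
  assert (HM0 : 0 < INR M) by (assert (0 < T / d0) by (apply Rdiv_lt_0_compat; lra); lra).
  assert (HM1 : (1 <= M)%nat).
  { destruct M as [|M']; [simpl in HM0; lra| lia]. }
  set (N := (2 ^ p * M)%nat).
  assert (HN : INR N = 2 ^ p * INR M).
  { unfold N. rewrite mult_INR, pow_INR. replace (INR 2) with 2 by (simpl; ring). reflexivity. }
  assert (H2p : 1 <= 2 ^ p) by (apply pow_R1_Rle; lra).
  assert (HN1 : (1 <= N)%nat).
  { unfold N. assert (0 < 2 ^ p)%nat by (apply Nat.neq_0_lt_0, Nat.pow_nonzero; lia). nia. }
  destruct (grid T k HG N HN1) as [t [[y [Hy Hyt]] Hsym]].
  assert (Hdd : T / INR N < d0).
  { rewrite HN. apply (Rmult_lt_reg_r (2 ^ p * INR M)); [nra|].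
    unfold Rdiv. rewrite Rmult_assoc, Rinv_l by nra. 
    apply (Rmult_lt_compat_r d0) in HM; [|lra]. unfold Rdiv in HM.
    rewrite Rmult_assoc, Rinv_l in HM by lra. nra. }
  assert (Hky : k y > k 0 - g).
  { assert (Rabs (y - 0) < d0) by (rewrite Rminus_0_r, Rabs_right; lra).
    apply C0 in H. apply Rabs_def2 in H. lra. }
  destruct (Hq t) as [j Hj]; [lra|].
  set (z := t - IZR j * T).
  assert (Hx : IZR (m * Z.of_nat M) * (T / INR N) = x).
  { unfold x. rewrite mult_IZR, <- INR_IZR_INZ, HN. field. split; lra. }
  pose proof (Hsym (m * Z.of_nat M)%Z) as S. rewrite Hx in S.
  replace (x + t) with ((x + z) + IZR j * T) in S by (unfold z; ring).
  replace (- x + t) with ((- x + z) + IZR j * T) in S by (unfold z; ring).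
  rewrite !(per_Z k T Hp) in S.
  assert (Rabs ((x + z) - x) < d1) by (replace ((x + z) - x) with z by ring; unfold z; lra).
  assert (Rabs ((- x + z) - - x) < d2) by (replace ((- x + z) - - x) with z by ring; unfold z; lra).
  apply C1 in H. apply C2 in H0. apply Rabs_def2 in H. apply Rabs_def2 in H0.
  unfold eta in *. unfold Rabs in *. destruct (Rcase_abs (k x - k (- x))); lra.
Qed.

Lemma pow2_ge n : INR n + 1 <= 2 ^ n.
Proof. induction n; [simpl; lra|]. rewrite S_INR. simpl. pose proof (pos_INR n). lra. Qed.

Lemma dense_eq (f g : R -> R) T : 0 < T -> continuity f -> continuity g ->
  (forall (m : Z) (p : nat), f (IZR m * T / 2 ^ p) = g (IZR m * T / 2 ^ p)) ->
  forall x, f x = g x.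
Proof.
  intros HT Hf Hg H x.
  destruct (Req_dec (f x) (g x)) as [E|E]; auto. exfalso.
  set (eta := Rabs (f x - g x)).
  assert (Heta : 0 < eta) by (apply Rabs_pos_lt; lra).
  destruct (cont_eps f x (Hf x) (eta/2)) as [d1 [Hd1 C1]]; [lra|].
  destruct (cont_eps g x (Hg x) (eta/2)) as [d2 [Hd2 C2]]; [lra|].
  set (de := Rmin d1 d2).
  assert (Hde : 0 < de) by (unfold de; apply Rmin_pos; lra).
  assert (Hde1 : de <= d1) by apply Rmin_l.
  assert (Hde2 : de <= d2) by apply Rmin_r.
  destruct (archimed (T / de)) as [Ar _].
  set (p := Z.to_nat (up (T / de))).
  assert (Hp : T / de < 2 ^ p).
  { pose proof (pow2_ge p). unfold p in *. rewrite INR_IZR_INZ, Znat.Z2Nat.id in H0; [lra|].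
    apply le_IZR. assert (0 < T / de) by (apply Rdiv_lt_0_compat; lra). lra. }
  assert (H2p : 0 < 2 ^ p) by (apply pow_lt; lra).
  assert (Hs : T / 2 ^ p < de).
  { apply (Rmult_lt_compat_r de) in Hp; [|lra]. unfold Rdiv in *.
    rewrite Rmult_assoc, Rinv_l in Hp by lra.
    apply (Rmult_lt_reg_r (2 ^ p)); auto. rewrite Rmult_assoc, Rinv_l by lra. lra. }
  destruct (floorZ (x * 2 ^ p / T)) as [z [Hz1 Hz2]].
  set (xz := IZR z * T / 2 ^ p).
  assert (Hxz : x - T / 2 ^ p < xz <= x).
  { unfold xz. split.
    - apply (Rmult_lt_compat_r (T / 2 ^ p)) in Hz2; [|apply Rdiv_lt_0_compat; lra].
      replace (x * 2 ^ p / T * (T / 2 ^ p)) with x in Hz2 by (field; lra).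
      replace (IZR z * T / 2 ^ p) with (IZR z * (T / 2 ^ p)) by (field; lra). lra.
    - apply (Rmult_le_compat_r (T / 2 ^ p)) in Hz1; [|left; apply Rdiv_lt_0_compat; lra].
      replace (x * 2 ^ p / T * (T / 2 ^ p)) with x in Hz1 by (field; lra).
      replace (IZR z * T / 2 ^ p) with (IZR z * (T / 2 ^ p)) by (field; lra). lra. }
  assert (Rabs (xz - x) < d1) by (rewrite Rabs_left1; lra).
  assert (Rabs (xz - x) < d2) by (rewrite Rabs_left1; lra).
  apply C1 in H0. apply C2 in H1. apply Rabs_def2 in H0. apply Rabs_def2 in H1.
  pose proof (H z p) as Hzp. fold xz in Hzp.
  unfold eta in *. unfold Rabs in *. destruct (Rcase_abs (f x - g x)); lra.
Qed.

Lemma k_even T k : Good T k -> forall x, k x = k (- x).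
Proof.
  intros HG. pose proof HG as (HT & Hc & _).
  apply (dense_eq k (fun x => k (- x)) T HT Hc).
  - intros x. change (continuity_pt (comp k (opp_fct id)) x). apply continuity_pt_comp. apply continuity_pt_opp, derivable_continuous_pt, derivable_pt_id. apply Hc.
  - intros. apply even_dyadic; auto.
Qed.

Lemma dalem T k : Good T k -> forall x s, k (x + s) + k (x - s) = 2 * k s * k x / k 0.
Proof.
  intros HG x s. pose proof HG as (HT & Hc & Hp & Ha & Hm & Hu & Hs).
  pose proof (Good_K T k HG) as HK. pose proof (k_even T k HG) as Hev.
  destruct (Hs 1 1 s (- s)) as [a [t [Ha0 Hv]]]; try lra.
  assert (Hv' : forall y, k (y + s) + k (y - s) = a * k (y + t)).
  { intros y. rewrite <- Hv. unfold Rminus. ring. }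
  assert (Hc0 : exists c, forall y, k (y + s) + k (y - s) = c * k y).
  { destruct (Rle_lt_or_eq_dec _ _ Ha0) as [Hapos|Ha00].
    - assert (Hsym : forall y, k (t - y) = k (t + y)).
      { intros y. pose proof (Hv' y) as E1. pose proof (Hv' (- y)) as E2.
        rewrite (Hev (- y + s)), (Hev (- y - s)) in E2.
        replace (- (- y + s)) with (y - s) in E2 by ring.
        replace (- (- y - s)) with (y + s) in E2 by ring.
        rewrite Rplus_comm, E1 in E2. apply Rmult_eq_reg_l in E2; [|lra].
        replace (t - y) with (- y + t) by ring. replace (t + y) with (y + t) by ring. lra. }
      assert (k (t + t) = k 0) by (rewrite <- Hsym; f_equal; ring).
      destruct (Hu _ H) as [j Hj].
      destruct (Z.Even_or_Odd j) as [[i Hi]|[i Hi]]; subst j.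
      + exists a. intros y. rewrite Hv'. f_equal.
        assert (t = IZR i * T) by (rewrite mult_IZR in Hj; simpl in Hj; lra).
        rewrite H0. apply per_Z; auto.
      + exists (- a). intros y. rewrite Hv'.
        assert (t = T/2 + IZR i * T) by (rewrite plus_IZR, mult_IZR in Hj; simpl in Hj; lra).
        rewrite H0. replace (y + (T/2 + IZR i * T)) with ((y + T/2) + IZR i * T) by ring.
        rewrite per_Z, Ha; auto. ring.
    - exists 0. intros y. rewrite Hv', <- Ha00. ring. }
  destruct Hc0 as [c Hc0].
  pose proof (Hc0 0) as E0. rewrite Rplus_0_l, Rminus_0_l, <- Hev in E0.
  rewrite Hc0. assert (Hc' : c = 2 * k s / k 0).
  { apply (Rmult_eq_reg_r (k 0)); [|lra]. unfold Rdiv. rewrite Rmult_assoc, Rinv_l by lra. lra. }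
  rewrite Hc'. field. lra.
Qed.

Lemma cos_sum a b : cos (a + b) + cos (a - b) = 2 * cos b * cos a.
Proof. rewrite cos_plus, cos_minus. ring. Qed.

Lemma k_nonneg T k : Good T k -> forall y, 0 <= y <= T/4 -> 0 <= k y.
Proof.
  intros HG y Hy. pose proof HG as (HT & Hc & Hp & Ha & Hm & Hu & Hs).
  pose proof (Good_K T k HG) as HK.
  destruct (Rle_or_lt 0 (k y)) as [|Hneg]; auto. exfalso.
  assert (Hy0 : 0 < y) by (destruct (Req_dec y 0); [subst; lra| lra]).
  destruct (IVT (opp_fct k) 0 y) as [z [Hz Hkz]]; auto.
  - apply continuity_opp; auto.
  - unfold opp_fct. lra.
  - unfold opp_fct. lra.
  - unfold opp_fct in Hkz. assert (Hk0 : k z = 0) by lra.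
    pose proof (dalem T k HG z z) as D. rewrite Hk0 in D.
    replace (z - z) with 0 in D by ring.
    assert (k (z + z) = - k 0) by (assert (2 * 0 * 0 / k 0 = 0) by (field; lra); lra).
    assert (k ((z + z) + T/2) = k 0) by (rewrite Ha; lra).
    destruct (Hu _ H0) as [j Hj].
    assert (0 < IZR j) by (apply (Rmult_lt_reg_r T); lra).
    assert (IZR j <= 1) by (apply (Rmult_le_reg_r T); lra).
    apply lt_IZR in H1. apply le_IZR in H2.
    assert (j = 1%Z) by lia. subst j. simpl in Hj.
    assert (z = y) by lra. subst z. lra.
Qed.

Lemma k_half T k : Good T k -> forall n : nat,
  k (T / 2 ^ S n) = k 0 * cos (2 * PI * (T / 2 ^ S n) / T).
Proof.
  intros HG n. pose proof HG as (HT & Hc & Hp & Ha & Hm & Hu & Hs).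
  pose proof (Good_K T k HG) as HK.
  induction n.
  - replace (T / 2 ^ 1) with (0 + T / 2) by (simpl; field).
    rewrite Ha. replace (2 * PI * (0 + T / 2) / T) with PI by (field; lra).
    rewrite cos_PI. ring.
  - set (y := T / 2 ^ S (S n)).
    assert (H2 : 0 < 2 ^ S n) by (apply pow_lt; lra).
    assert (Hyy : y + y = T / 2 ^ S n) by (unfold y; replace (2 ^ S (S n)) with (2 * 2 ^ S n) by (simpl; ring); field; lra).
    pose proof (dalem T k HG y y) as D. rewrite Hyy in D. replace (y - y) with 0 in D by ring.
    rewrite IHn in D.
    set (th := 2 * PI * y / T).
    replace (2 * PI * (T / 2 ^ S n) / T) with (2 * th) in D by (unfold th; rewrite <- Hyy; field; lra).
    rewrite cos_2a_cos in D.
    assert (Hyb : 0 <= y <= T/4).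
    { unfold y. split. left. apply Rdiv_lt_0_compat; [lra| apply pow_lt; lra].
      replace (2 ^ S (S n)) with (4 * 2 ^ n) by (simpl; ring).
      assert (1 <= 2 ^ n) by (apply pow_R1_Rle; lra).
      apply (Rmult_le_reg_r (4 * 2 ^ n)); [lra|]. unfold Rdiv. rewrite Rmult_assoc, Rinv_l by lra. nra. }
    assert (Hky := k_nonneg T k HG y Hyb).
    assert (Hcos : 0 <= cos th).
    { apply cos_ge_0.
      - unfold th. assert (0 <= 2 * PI * y / T). { apply Rmult_le_pos; [|left; apply Rinv_0_lt_compat; lra]. pose proof PI_RGT_0. nra. } pose proof PI_RGT_0. lra.
      - unfold th. apply (Rmult_le_reg_r T); [lra|]. unfold Rdiv. rewrite Rmult_assoc, Rinv_l by lra. pose proof PI_RGT_0. nra. }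
    assert (Sq : k y * k y = (k 0 * cos th) * (k 0 * cos th)).
    { assert (E : 2 * k y * k y / k 0 * k 0 = 2 * k y * k y) by (field; lra).
      rewrite <- D in E. nra. }
    assert (0 <= k 0 * cos th) by nra.
    nra.
Qed.

Lemma k_mult T k : Good T k -> forall y, k y = k 0 * cos (2 * PI * y / T) ->
  forall m : nat, k (INR m * y) = k 0 * cos (2 * PI * (INR m * y) / T).
Proof.
  intros HG y Hy.
  assert (forall m : nat, k (INR m * y) = k 0 * cos (2 * PI * (INR m * y) / T) /\
                          k (INR (S m) * y) = k 0 * cos (2 * PI * (INR (S m) * y) / T)).
  { pose proof HG as (HT & _). pose proof (Good_K T k HG) as HK.
    induction m.
    - simpl. rewrite Rmult_0_l, Rmult_1_l. split; auto.
      replace (2 * PI * 0 / T) with 0 by (field; lra). rewrite cos_0. ring.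
    - destruct IHm as [I1 I2]. split; auto.
      pose proof (dalem T k HG (INR (S m) * y) y) as D.
      replace (INR (S m) * y - y) with (INR m * y) in D by (rewrite S_INR; ring).
      replace (INR (S m) * y + y) with (INR (S (S m)) * y) in D by (rewrite (S_INR (S m)); ring).
      rewrite I1, I2, Hy in D.
      pose proof (cos_sum (2 * PI * (INR (S m) * y) / T) (2 * PI * y / T)) as C.
      replace (2 * PI * (INR (S m) * y) / T + 2 * PI * y / T) with (2 * PI * (INR (S (S m)) * y) / T) in C
        by (rewrite (S_INR (S m)); field; lra).
      replace (2 * PI * (INR (S m) * y) / T - 2 * PI * y / T) with (2 * PI * (INR m * y) / T) in C
        by (rewrite S_INR; field; lra).
      assert (E : k (INR (S (S m)) * y) = 2 * (k 0 * cos (2 * PI * y / T)) * (k 0 * cos (2 * PI * (INR (S m) * y) / T)) / k 0 - k 0 * cos (2 * PI * (INR m * y) / T)) by lra.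
      rewrite E. replace (cos (2 * PI * (INR (S (S m)) * y) / T)) with
        (2 * cos (2 * PI * y / T) * cos (2 * PI * (INR (S m) * y) / T) - cos (2 * PI * (INR m * y) / T)) by lra.
      field. lra. }
  intros m. apply H.
Qed.

Lemma k_cos T k : Good T k -> forall x, k x = k 0 * cos (2 * PI * x / T).
Proof.
  intros HG. pose proof HG as (HT & Hc & Hp & Ha & Hm & Hu & Hs).
  pose proof (Good_K T k HG) as HK.
  apply (dense_eq k (fun x => k 0 * cos (2 * PI * x / T)) T HT Hc).
  - intros x. apply derivable_continuous_pt. reg.
  - intros m p. cbv beta.
    set (y := T / 2 ^ S p).
    assert (Hx : IZR m * T / 2 ^ p = IZR (2 * m) * y).
    { unfold y. rewrite mult_IZR. simpl (IZR 2). replace (2 ^ S p) with (2 * 2 ^ p) by (simpl; ring).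
      field. apply pow_nonzero. lra. }
    rewrite Hx.
    pose proof (k_mult T k HG y (k_half T k HG p)) as KM.
    destruct (Z.le_gt_cases 0 (2 * m)) as [H0|H0].
    + rewrite <- (Znat.Z2Nat.id (2 * m)) by lia. rewrite <- INR_IZR_INZ. apply KM.
    + set (n := Z.to_nat (- (2 * m))).
      assert (E : IZR (2 * m) = - INR n).
      { unfold n. rewrite INR_IZR_INZ, Znat.Z2Nat.id by lia. rewrite opp_IZR. ring. }
      rewrite E. replace (- INR n * y) with (- (INR n * y)) by ring.
      rewrite <- (k_even T k HG). rewrite KM. f_equal.
      replace (2 * PI * - (INR n * y) / T) with (- (2 * PI * (INR n * y) / T)) by (field; lra).
      rewrite cos_neg. auto.
Qed.

Theorem proposition3 (lmin lmax : R) (h : R -> R) :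
  lmin < lmax ->
  continuity h ->
  (forall x, h (x + (lmax - lmin)) = h x) ->
  unique_max_on_period lmin lmax h ->
  mult_closed (gvM_family lmin lmax h) ->
  forall f : R -> R,
    gvM_family lmin lmax h f <-> gvM_family lmin lmax (vM_cos lmin lmax) f.
Proof.
  intros Hlt Hc Hper Hum Hmc.
  set (T := lmax - lmin) in *.
  assert (HT : 0 < T) by (unfold T; lra).
  assert (Hred : forall y, exists j : Z, lmin <= y - IZR j * T < lmax).
  { intros y. destruct (floorZ ((y - lmin) / T)) as [j [Hj1 Hj2]]. exists j.
    apply (Rmult_le_compat_r T) in Hj1; [|lra]. apply (Rmult_lt_compat_r T) in Hj2; [|lra].
    unfold Rdiv in *. rewrite Rmult_assoc, Rinv_l in Hj1, Hj2 by lra.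
    unfold T in *. lra. }
  assert (Hext : forall F G : R -> R, (forall x, F (x + T) = F x) -> (forall x, G (x + T) = G x) ->
            (forall l, lmin <= l <= lmax -> F l = G l) -> forall x, F x = G x).
  { intros F G HF HG HFG x. destruct (Hred x) as [j Hj].
    replace x with ((x - IZR j * T) + IZR j * T) by ring.
    rewrite (per_Z F T HF), (per_Z G T HG). apply HFG. lra. }
  assert (Hcl : forall a1 a2 s1 s2, 0 <= a1 -> 0 <= a2 -> exists a b s, 0 <= a /\
            forall x, a1 * h (x - s1) + a2 * h (x - s2) = b + a * h (x - s)).
  { intros a1 a2 s1 s2 H1 H2.
    destruct (Hmc (fun l => exp (0 + a1 * h (l - s1))) (fun l => exp (0 + a2 * h (l - s2))))
      as [a [b [s [Ha Hf]]]].
    - exists a1, 0, s1. split; auto.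
    - exists a2, 0, s2. split; auto.
    - exists a, b, s. split; auto.
      apply Hext.
      + intros x. replace (x + T - s1) with ((x - s1) + T) by ring.
        replace (x + T - s2) with ((x - s2) + T) by ring. rewrite !Hper. auto.
      + intros x. replace (x + T - s) with ((x - s) + T) by ring. rewrite Hper. auto.
      + intros l Hl. apply exp_inv. rewrite <- Hf by auto. rewrite <- exp_plus. f_equal. ring. }
  destruct Hum as [x0 [[Hx0 Hmax] Huniq]].
  assert (Hmaxg : forall y, h y <= h x0).
  { intros y. destruct (Hred y) as [j Hj].
    replace y with ((y - IZR j * T) + IZR j * T) by ring. rewrite (per_Z h T Hper). apply Hmax. lra. }
  assert (Huniqg : forall y, h y = h x0 -> exists j : Z, y = x0 + IZR j * T).
  { intros y Hy. destruct (Hred y) as [j Hj]. exists j.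
    assert (h (y - IZR j * T) = h x0).
    { rewrite <- Hy. replace y with ((y - IZR j * T) + IZR j * T) at 2 by ring.
      rewrite (per_Z h T Hper). auto. }
    assert (x0 = y - IZR j * T).
    { apply Huniq. split; [lra|]. intros z Hz. rewrite H. apply Hmax; auto. }
    lra. }
  destruct (Hcl 1 1 0 (- (T/2))) as [a [b [s [Ha0 Hab]]]]; try lra.
  assert (Ha00 : a = 0).
  { destruct (Rle_lt_or_eq_dec _ _ Ha0) as [Hapos|]; auto. exfalso.
    assert (Hhp : forall z, h (z + T/2) = h z).
    { intros z. pose proof (Hab (z + s)) as E1. pose proof (Hab (z + s + T/2)) as E2.
      replace (z + s + T / 2 - - (T / 2)) with ((z + s) + T) in E2 by field.
      rewrite Hper in E2. replace (z + s - - (T / 2)) with (z + s + T/2) in E1 by field.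
      replace (z + s + T / 2 - 0) with (z + s + T/2) in E2 by field.
      replace (z + s - 0) with (z + s) in E1 by field.
      replace (z + s + T / 2 - s) with (z + T/2) in E2 by field.
      replace (z + s - s) with z in E1 by field.
      assert (a * h (z + T/2) = a * h z) by lra.
      apply Rmult_eq_reg_l in H; lra. }
    destruct (Huniqg (x0 + T/2)) as [j Hj]. apply Hhp.
    apply (IZR_half j). apply (Rmult_eq_reg_r T); lra. }
  subst a.
  set (mu := b / 2).
  assert (Hmu : forall x, h x + h (x + T/2) = 2 * mu).
  { intros x. pose proof (Hab x) as E. replace (x - - (T/2)) with (x + T/2) in E by ring.
    replace (x - 0) with x in E by ring. unfold mu. lra. }
  set (k := fun y => h (y + x0) - mu).
  assert (HG : Good T k).
  { unfold Good. split; [auto|]. split.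
    { intros y. unfold k. apply (continuity_pt_minus (fun y => h (y + x0)) (fun _ => mu)).
      - change (continuity_pt (comp h (fun y => y + x0)) y). apply continuity_pt_comp.
        + apply derivable_continuous_pt. reg.
        + apply Hc.
      - apply continuity_pt_const. intros ? ?. reflexivity. }
    split.
    { intros x. unfold k. replace (x + T + x0) with ((x + x0) + T) by ring. rewrite Hper. auto. }
    split.
    { intros x. unfold k. pose proof (Hmu (x + x0)) as E.
      replace (x + T / 2 + x0) with (x + x0 + T/2) by ring. lra. }
    split.
    { intros x. unfold k. rewrite Rplus_0_l. pose proof (Hmaxg (x + x0)). lra. }
    split.
    { intros z. unfold k. rewrite Rplus_0_l. intros E.
      destruct (Huniqg (z + x0)) as [j Hj]; [lra|]. exists j. lra. }
    intros a1 a2 t1 t2 H1 H2.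
    destruct (Hcl a1 a2 (- (t1 + x0)) (- (t2 + x0)) H1 H2) as [a [b' [s' [Ha Hs']]]].
    exists a, (- s' - x0). split; auto.
    set (C := b' - (a1 + a2) * mu + a * mu).
    assert (EA : forall x, a1 * k (x + t1) + a2 * k (x + t2) = C + a * k (x + (- s' - x0))).
    { intros x. unfold k, C. pose proof (Hs' x) as E.
      replace (x - - (t1 + x0)) with (x + t1 + x0) in E by ring.
      replace (x - - (t2 + x0)) with (x + t2 + x0) in E by ring.
      replace (x + (- s' - x0) + x0) with (x - s') by ring. lra. }
    assert (Hanti : forall y, k (y + T/2) = - k y).
    { intros y. unfold k. pose proof (Hmu (y + x0)) as E.
      replace (y + T / 2 + x0) with (y + x0 + T/2) by ring. lra. }
    assert (HC : C = 0).
    { pose proof (EA 0) as E1. pose proof (EA (0 + T/2)) as E2.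
      replace (0 + T / 2 + t1) with ((0 + t1) + T/2) in E2 by ring.
      replace (0 + T / 2 + t2) with ((0 + t2) + T/2) in E2 by ring.
      replace (0 + T / 2 + (- s' - x0)) with ((0 + (- s' - x0)) + T/2) in E2 by ring.
      rewrite !Hanti in E2. lra. }
    intros x. rewrite EA, HC. ring. }
  pose proof (Good_K T k HG) as HK.
  pose proof (k_cos T k HG) as Hkc.
  assert (Hh : forall y, h y = mu + k 0 * cos (2 * PI * (y - x0) / T)).
  { intros y. rewrite <- Hkc. unfold k. replace (y - x0 + x0) with y by ring. ring. }
  intros f. unfold gvM_family, vM_cos. fold T. split.
  - intros [a [b' [s' [Ha Hf]]]].
    exists (a * k 0), (b' + a * mu), (s' + x0). split; [nra|].
    intros l Hl. rewrite Hf by auto. f_equal. rewrite Hh.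
    replace (l - s' - x0) with (l - (s' + x0)) by ring. ring.
  - intros [a [b' [s' [Ha Hf]]]].
    exists (a / k 0), (b' - a * mu / k 0), (s' - x0). split.
    { apply Rmult_le_pos; auto. left. apply Rinv_0_lt_compat; auto. }
    intros l Hl. rewrite Hf by auto. f_equal. rewrite Hh.
    replace (l - (s' - x0) - x0) with (l - s') by ring. field. lra.
Qed.
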